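(* There exists $\varepsilon_0>0$ such that for every $\varepsilon\in(0,\varepsilon_0)$ the following holds. Let $\mathbf{U}$ be the $7\times 7$ matrix $$\mathbf{U}=\begin{pmatrix} 0 & -1 & \varepsilon & -10 & -\tfrac13+\varepsilon & -\tfrac13+\varepsilon & -\tfrac13+\varepsilon\\ \varepsilon & 0 & -1 & -10 & -\tfrac13+\varepsilon & -\tfrac13+\varepsilon & -\tfrac13+\varepsilon\\ -1 & \varepsilon & 0 & -10 & -\tfrac13+\varepsilon & -\tfrac13+\varepsilon & -\tfrac13+\varepsilon\\ -2 & -2 & 2 & 0 & -\tfrac13 & -\tfrac13 & -\tfrac13\\ -\tfrac13 & -\tfrac13 & -\tfrac13 & 10 & 0 & -1 & \varepsilon\\ -\tfrac13 & -\tfrac13 & -\tfrac13 & 10 & \varepsilon & 0 & -1\\ -\tfrac13 & -\tfrac13 & -\tfrac13 & 10 & -1 & \varepsilon & 0 \end{pmatrix},$$ and let $(\mathbf{x},\mathbf{y})$ be a Nash equilibrium of the symmetric game with payoff matrix $\mathbf{U}$. If $x_1+x_2+x_3>0$ and $y_1+y_2+y_3>0$, then $x_1=x_2=x_3$ and $y_1=y_2=y_3$. If $x_5+x_6+x_7>0$ and $y_5+y_6+y_7>0$, then $x_5=x_6=x_7$ and $y_5=y_6=y_7$.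
   Context: Mixed strategies are elements of $S_7=\{\mathbf{x}\in\mathbb{R}_+^7:\sum_i x_i=1\}$; for the profile $(\mathbf{x},\mathbf{y})$ the row player gets $\mathbf{x}\cdot\mathbf{U}\mathbf{y}$ and the column player gets $\mathbf{y}\cdot\mathbf{U}\mathbf{x}$. The paper assumes throughout that $\varepsilon>0$ is ''small enough''. *)

(* Defs.v *)
From mathcomp Require Import all_boot all_order all_algebra.
Set Implicit Arguments. Unset Strict Implicit. Unset Printing Implicit Defensive.
Import Order.TTheory GRing.Theory Num.Theory.
Local Open Scope ring_scope.

Definition mixed_strategy (R : realFieldType) (n : nat) (x : 'I_n -> R) : Prop :=
  (forall i, 0 <= x i) /\ \sum_(i < n) x i = 1.

Definition payoff (R : realFieldType) (n : nat) (U : 'M[R]_n) (x y : 'I_n -> R) : R :=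
  \sum_(i < n) \sum_(j < n) x i * U i j * y j.

Definition symmetric_nash (R : realFieldType) (n : nat) (U : 'M[R]_n)
  (x y : 'I_n -> R) : Prop :=
  mixed_strategy x /\ mixed_strategy y /\
  (forall x', mixed_strategy x' -> payoff U x' y <= payoff U x y) /\
  (forall y', mixed_strategy y' -> payoff U y' x <= payoff U y x).

(* The 7x7 matrix of the lemma, rows/cols indexed 0..6 (paper's 1..7). *)
Definition Ueps (R : realFieldType) (e : R) : 'M[R]_7 :=
  \matrix_(i < 7, j < 7)
   let t := (-(1/3%:R) + e) in
   let q := -(1/3%:R) in
   match nat_of_ord i, nat_of_ord j with
   | 0, 0 => 0 | 0, 1 => -1 | 0, 2 => e | 0, 3 => -10%:R | 0, _ => t
   | 1, 0 => e | 1, 1 => 0 | 1, 2 => -1 | 1, 3 => -10%:R | 1, _ => t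
   | 2, 0 => -1 | 2, 1 => e | 2, 2 => 0 | 2, 3 => -10%:R | 2, _ => t
   | 3, 0 => -2%:R | 3, 1 => -2%:R | 3, 2 => 2%:R | 3, 3 => 0 | 3, _ => q
   | 4, 3 => 10%:R | 4, 4 => 0 | 4, 5 => -1 | 4, 6 => e | 4, _ => q
   | 5, 3 => 10%:R | 5, 4 => e | 5, 5 => 0 | 5, 6 => -1 | 5, _ => q
   | _, 3 => 10%:R | _, 4 => -1 | _, 5 => e | _, 6 => 0 | _, _ => q
   end.

(* Main.v *)
Require Import Defs.
From mathcomp Require Import all_boot all_order all_algebra.
From mathcomp Require Import ring lra.
Import Order.TTheory GRing.Theory Num.Theory.
Local Open Scope ring_scope.

Lemma payoffE (R : realFieldType) n (U : 'M[R]_n) x y :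
  payoff U x y = \sum_i x i * (\sum_j U i j * y j).
Proof.
rewrite /payoff; apply eq_bigr => i _; rewrite mulr_sumr; apply eq_bigr => j _.
by rewrite mulrA.
Qed.

Lemma sum_if (R : realFieldType) n (k : 'I_n) (F : 'I_n -> R) :
  \sum_l (if l == k then F l else 0) = F k.
Proof.
rewrite (bigD1 k) //= eqxx big1 ?addr0 // => l /negbTE -> //.
Qed.

Lemma br (R : realFieldType) n (U : 'M[R]_n) x y :
  mixed_strategy x ->
  (forall x', mixed_strategy x' -> payoff U x' y <= payoff U x y) ->
  forall i k : 'I_n, 0 < x i -> \sum_j U k j * y j <= \sum_j U i j * y j.
Proof.
move=> [x0 x1] H i k xi.
pose r l := \sum_j U l j * y j.
pose x' := fun l => x l + (if l == k then x i else 0) - (if l == i then x i else 0).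
have Hm : mixed_strategy x'.
  split.
    move=> l; rewrite /x'; case: (eqVneq l i) => [->|_].
      have := x0 i; case: (i == k); lra.
    have := x0 l; have := x0 i; case: (l == k); lra.
  rewrite /x' sumrB big_split /= x1.
  rewrite (@sum_if _ _ k (fun _ => x i)) (@sum_if _ _ i (fun _ => x i)); lra.
have := H _ Hm; rewrite !payoffE.
have -> : \sum_i0 x' i0 * (\sum_j U i0 j * y j) =
  \sum_i0 x i0 * r i0 + x i * r k - x i * r i.
  rewrite /x' /r.
  under eq_bigr => l _ do rewrite mulrBl mulrDl.
  rewrite sumrB big_split /=.
  have E : forall m : 'I_n, \sum_l (if l == m then x i else 0) * (\sum_j U l j * y j)
     = x i * \sum_j U m j * y j.
    move=> m; rewrite -(@sum_if _ _ m (fun l => x i * \sum_j U l j * y j)).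
    by apply: eq_bigr => l _; case: (l == m); rewrite ?mul0r.
  by rewrite !E.
rewrite -/r; move=> h.
have : x i * (r k - r i) <= 0 by lra.
rewrite pmulr_rle0 // subr_le0 //.
Qed.


Lemma dich (R : realFieldType) (e v : R) (P : Prop) : 0 < e -> 0 <= v -> (0 < v -> P) ->
  (v = 0 /\ e * v = 0) \/ (0 < v /\ 0 < e * v /\ P).
Proof.
move=> e0; rewrite le0r => /orP [/eqP ->|h] H; first by left; rewrite mulr0.
by right; split => //; split; [exact: mulr_gt0|exact: H].
Qed.

Arguments dich {R e v P}.
Lemma rps (R : realFieldType) (e a1 a2 a3 b1 b2 b3 : R) : 0 < e ->
  0 <= a1 -> 0 <= a2 -> 0 <= a3 -> 0 <= b1 -> 0 <= b2 -> 0 <= b3 ->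
  0 < a1 + a2 + a3 -> 0 < b1 + b2 + b3 ->
  (0 < a1 -> e * b1 - b3 <= - b2 + e * b3 /\ - b1 + e * b2 <= - b2 + e * b3) ->
  (0 < a2 -> - b2 + e * b3 <= e * b1 - b3 /\ - b1 + e * b2 <= e * b1 - b3) ->
  (0 < a3 -> - b2 + e * b3 <= - b1 + e * b2 /\ e * b1 - b3 <= - b1 + e * b2) ->
  (0 < b1 -> e * a1 - a3 <= - a2 + e * a3 /\ - a1 + e * a2 <= - a2 + e * a3) ->
  (0 < b2 -> - a2 + e * a3 <= e * a1 - a3 /\ - a1 + e * a2 <= e * a1 - a3) ->
  (0 < b3 -> - a2 + e * a3 <= - a1 + e * a2 /\ e * a1 - a3 <= - a1 + e * a2) ->
  a1 = a2 /\ a2 = a3 /\ b1 = b2 /\ b2 = b3.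
Proof.
move=> e0 ha1 ha2 ha3 hb1 hb2 hb3 sa sb A1 A2 A3 B1 B2 B3.
have key : forall u w : R, 0 = - w - e * (u + w) -> 0 = e * u + u + w -> u = 0 /\ w = 0.
  move=> u w h1 h2.
  have hw : w = - (1 + e) * u by lra.
  have : u * (1 + e + e * e) = 0 by rewrite hw in h1; nra.
  move/eqP; rewrite mulf_eq0 => /orP [/eqP u0|/eqP]; last by nra.
  by split => //; rewrite hw u0 mulr0.
have ge1 := mulr_ge0 (ltW e0) ha1; have ge2 := mulr_ge0 (ltW e0) ha2; have ge3 := mulr_ge0 (ltW e0) ha3.
have he1 := mulr_ge0 (ltW e0) hb1; have he2 := mulr_ge0 (ltW e0) hb2; have he3 := mulr_ge0 (ltW e0) hb3.
have D1 := dich e0 ha1 A1; have D2 := dich e0 ha2 A2; have D3 := dich e0 ha3 A3.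
have E1 := dich e0 hb1 B1; have E2 := dich e0 hb2 B2; have E3 := dich e0 hb3 B3.
clear A1 A2 A3 B1 B2 B3.
case: D1 => [[z1 f1]|[pa1 [ea1 [P1 P1']]]];
case: D2 => [[z2 f2]|[pa2 [ea2 [P2 P2']]]];
case: D3 => [[z3 f3]|[pa3 [ea3 [P3 P3']]]];
case: E1 => [[y1 g1]|[pb1 [eb1 [Q1 Q1']]]];
case: E2 => [[y2 g2]|[pb2 [eb2 [Q2 Q2']]]];
case: E3 => [[y3 g3]|[pb3 [eb3 [Q3 Q3']]]]; try subst; try (exfalso; clear key; lra).
have [u1 w1] := key (a1 - a2) (a2 - a3) ltac:(lra) ltac:(lra).
have [u2 w2] := key (b1 - b2) (b2 - b3) ltac:(lra) ltac:(lra).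
lra.
Qed.


Lemma sum7 (R : realFieldType) (F : 'I_7 -> R) :
  \sum_(j < 7) F j = F (inord 0) + F (inord 1) + F (inord 2) + F (inord 3)
    + F (inord 4) + F (inord 5) + F (inord 6).
Proof.
rewrite (eq_bigr (fun j => F (inord (val j)))); last by move=> j _; rewrite inord_val.
rewrite !big_ord_recl big_ord0 /=.
rewrite !addrA addr0 //.
Qed.


Arguments br {R n U x y}.
Arguments rps {R e a1 a2 a3 b1 b2 b3}.
Ltac brs B i k1 k2 := let h := fresh "h" in move=> h;
  move: (B (inord i) (inord k1) h) (B (inord i) (inord k2) h);
  rewrite !sum7 !mxE !inordK //= => ? ?; split; lra.

Theorem lemma5 (R : realFieldType) :
  exists eps0 : R, 0 < eps0 /\
  forall eps : R, 0 < eps -> eps < eps0 ->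
  forall x y : 'I_7 -> R,
    symmetric_nash (Ueps eps) x y ->
    (0 < x (inord 0) + x (inord 1) + x (inord 2) ->
     0 < y (inord 0) + y (inord 1) + y (inord 2) ->
     x (inord 0) = x (inord 1) /\ x (inord 1) = x (inord 2) /\
     y (inord 0) = y (inord 1) /\ y (inord 1) = y (inord 2)) /\
    (0 < x (inord 4) + x (inord 5) + x (inord 6) ->
     0 < y (inord 4) + y (inord 5) + y (inord 6) ->
     x (inord 4) = x (inord 5) /\ x (inord 5) = x (inord 6) /\
     y (inord 4) = y (inord 5) /\ y (inord 5) = y (inord 6)).
Proof.
exists 1; split; first lra.
move=> e e0 _ x y [mx [my [Hx Hy]]].
have bx := br mx Hx; have bY := br my Hy.
have [x0 _] := mx; have [y0 _] := my.
split => [sx sy | sx sy].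
- apply: (rps e0 (x0 _) (x0 _) (x0 _) (y0 _) (y0 _) (y0 _) sx sy).
  + brs bx 0%N 1%N 2%N.
  + brs bx 1%N 0%N 2%N.
  + brs bx 2%N 0%N 1%N.
  + brs bY 0%N 1%N 2%N.
  + brs bY 1%N 0%N 2%N.
  + brs bY 2%N 0%N 1%N.
- apply: (rps e0 (x0 _) (x0 _) (x0 _) (y0 _) (y0 _) (y0 _) sx sy).
  + brs bx 4%N 5%N 6%N.
  + brs bx 5%N 4%N 6%N.
  + brs bx 6%N 4%N 5%N.
  + brs bY 4%N 5%N 6%N.
  + brs bY 5%N 4%N 6%N.
  + brs bY 6%N 4%N 5%N.
Qed.
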